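(* Let $\mathsf{L}\in\{\mathsf{CN4K},\mathsf{CN4K}^\pm,\mathsf{CN4K}^\curlyvee,\mathsf{CN4K}^{\Join},\mathsf{CN4K}^1\}$, $\Gamma$ a finite multiset of formulas and $\phi$ a formula. If $\mathsf{L}\models\bigwedge_{\psi\in\Gamma}\psi\to\phi$ (for $\Gamma$ empty: $\mathsf{L}\models\phi$), then the sequent $\Gamma\Rightarrow\phi$ is provable in $\mathcal{G}\mathsf{L}$.
   Context: Fix a countable set $\mathsf{Prop}$ of propositional variables. The language $\mathcal{L}$ is given by the grammar $\phi::=p\mid{\sim}\phi\mid(\phi\wedge\phi)\mid(\phi\vee\phi)\mid(\phi\to\phi)\mid\Box\phi\mid\Diamond\phi$ with $p\in\mathsf{Prop}$. Semantics. A $\mathsf{CN4K}$ frame is $\langle W,\le,R^+_\Box,R^-_\Box,R^+_\Diamond,R^-_\Diamond\rangle$ with $W\ne\varnothing$, $\le$ a preorder on $W$, and four arbitrary binary relations; $R(w)=\{w'\mid wRw'\}$. It is $\pm$-birelational if $R^+_\Box=R^+_\Diamond$ and $R^-_\Box=R^-_\Diamond$; $\curlyvee$-birelational if $R^+_\Box=R^-_\Box$ and $R^+_\Diamond=R^-_\Diamond$; $\Join$-birelational if $R^+_\Box=R^-_\Diamond$ and $R^+_\Diamond=R^-_\Box$; monorelational if all four coincide. A model adds $v^+,v^-:\mathsf{Prop}\to2^W$ upward closed under $\le$. Support: $w\Vdash^\pm p$ iff $w\in v^\pm(p)$; $w\Vdash^+{\sim}\phi$ iff $w\Vdash^-\phi$;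 $w\Vdash^-{\sim}\phi$ iff $w\Vdash^+\phi$; $w\Vdash^+\phi\wedge\chi$ iff both; $w\Vdash^-\phi\wedge\chi$ iff $w\Vdash^-\phi$ or $w\Vdash^-\chi$; $w\Vdash^+\phi\vee\chi$ iff $w\Vdash^+\phi$ or $w\Vdash^+\chi$; $w\Vdash^-\phi\vee\chi$ iff both negatively supported; $w\Vdash^+\phi\to\chi$ iff for all $w'\ge w$, $w'\Vdash^+\phi$ implies $w'\Vdash^+\chi$; $w\Vdash^-\phi\to\chi$ iff $w\Vdash^+\phi$ and $w\Vdash^-\chi$; $w\Vdash^+\Box\phi$ iff $\forall w'\ge w\ \forall w''\in R^+_\Box(w')$: $w''\Vdash^+\phi$; $w\Vdash^-\Box\phi$ iff $\forall w'\ge w\ \exists w''\in R^-_\Box(w')$: $w''\Vdash^-\phi$; $w\Vdash^+\Diamond\phi$ iff $\forall w'\ge w\ \exists w''\in R^+_\Diamond(w')$: $w''\Vdash^+\phi$; $w\Vdash^-\Diamond\phi$ iff $\forall w'\ge w\ \forall w''\in R^-_\Diamond(w')$: $w''\Vdash^-\phi$. $\mathsf{CN4K}$, $\mathsf{CN4K}^\pm$, $\mathsf{CN4K}^\curlyvee$, $\mathsf{CN4K}^{\Join}$, $\mathsf{CN4K}^1$ are the logics of all frames, $\pm$-, $\curlyvee$-, $\Join$-birelational, and monorelational frames, resp.; $\mathsf{L}\models\chi$ means $\mathfrak{M},w\Vdash^+\chi$ for every model $\mathfrak{M}$ on a frame of the class of $\mathsf{L}$ and every state $w$. Sequents. A sequent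 is $\Gamma\Rightarrow\phi$ with $\Gamma$ a finite multiset of formulas and $\phi$ a single formula. $\Gamma^\Box=\{\phi\mid\Box\phi\in\Gamma\}$, $\Gamma^\Diamond_\sim=\{{\sim}\phi\mid{\sim}\Diamond\phi\in\Gamma\}$ (multisets). Rules are written premise(s) / conclusion. Rules of $\mathcal{G}\mathsf{N4}$: axioms $p,\Gamma\Rightarrow p$ and ${\sim}p,\Gamma\Rightarrow{\sim}p$ ($p\in\mathsf{Prop}$); ${\sim}{\sim}_l$: $\phi,\Gamma\Rightarrow\psi$ / ${\sim}{\sim}\phi,\Gamma\Rightarrow\psi$; ${\sim}{\sim}_r$: $\Gamma\Rightarrow\phi$ / $\Gamma\Rightarrow{\sim}{\sim}\phi$; $\wedge_l$: $\phi,\chi,\Gamma\Rightarrow\psi$ / $\phi\wedge\chi,\Gamma\Rightarrow\psi$; $\wedge_r$: $\Gamma\Rightarrow\phi$ and $\Gamma\Rightarrow\chi$ / $\Gamma\Rightarrow\phi\wedge\chi$; $\vee_l$: $\phi,\Gamma\Rightarrow\psi$ and $\chi,\Gamma\Rightarrow\psi$ / $\phi\vee\chi,\Gamma\Rightarrow\psi$; $\vee_{r_1}$: $\Gamma\Rightarrow\phi$ / $\Gamma\Rightarrow\phi\vee\chi$; $\vee_{r_2}$: $\Gamma\Rightarrow\chi$ / $\Gamma\Rightarrow\phi\vee\chi$; ${\sim}\vee_l$: ${\sim}\phi,{\sim}\chi,\Gamma\Rightarrow\psi$ / ${\sim}(\phi\vee\chi),\Gamma\Rightarrow\psi$; ${\sim}\vee_r$: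 $\Gamma\Rightarrow{\sim}\phi$ and $\Gamma\Rightarrow{\sim}\chi$ / $\Gamma\Rightarrow{\sim}(\phi\vee\chi)$; ${\sim}\wedge_l$: ${\sim}\phi,\Gamma\Rightarrow\psi$ and ${\sim}\chi,\Gamma\Rightarrow\psi$ / ${\sim}(\phi\wedge\chi),\Gamma\Rightarrow\psi$; ${\sim}\wedge_{r_1}$: $\Gamma\Rightarrow{\sim}\phi$ / $\Gamma\Rightarrow{\sim}(\phi\wedge\chi)$; ${\sim}\wedge_{r_2}$: $\Gamma\Rightarrow{\sim}\chi$ / $\Gamma\Rightarrow{\sim}(\phi\wedge\chi)$; $\to_l$: $\phi\to\chi,\Gamma\Rightarrow\phi$ and $\chi,\Gamma\Rightarrow\psi$ / $\phi\to\chi,\Gamma\Rightarrow\psi$; $\to_r$: $\Gamma,\phi\Rightarrow\chi$ / $\Gamma\Rightarrow\phi\to\chi$; ${\sim}\!\to_l$: $\phi,{\sim}\chi,\Gamma\Rightarrow\psi$ / ${\sim}(\phi\to\chi),\Gamma\Rightarrow\psi$; ${\sim}\!\to_r$: $\Gamma\Rightarrow\phi$ and $\Gamma\Rightarrow{\sim}\chi$ / $\Gamma\Rightarrow{\sim}(\phi\to\chi)$. Modal rules: $\Box$: $\Gamma^\Box\Rightarrow\chi$ / $\Gamma\Rightarrow\Box\chi$; $\Diamond$: $\phi\Rightarrow\chi$ / $\Gamma,\Diamond\phi\Rightarrow\Diamond\chi$; $\Box_\sim$: ${\sim}\phi\Rightarrow{\sim}\chi$ / $\Gamma,{\sim}\Box\phi\Rightarrow{\sim}\Box\chi$;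 $\Diamond_\sim$: $\Gamma^\Diamond_\sim\Rightarrow{\sim}\chi$ / $\Gamma\Rightarrow{\sim}\Diamond\chi$; $\Diamond^\pm$: $\Gamma^\Box,\phi\Rightarrow\chi$ / $\Gamma,\Diamond\phi\Rightarrow\Diamond\chi$; $\Box^\pm_\sim$: $\Gamma^\Diamond_\sim,{\sim}\phi\Rightarrow{\sim}\chi$ / $\Gamma,{\sim}\Box\phi\Rightarrow{\sim}\Box\chi$; $\Diamond^\curlyvee$: $\Gamma^\Diamond_\sim,\phi\Rightarrow\chi$ / $\Gamma,\Diamond\phi\Rightarrow\Diamond\chi$; $\Box^\curlyvee_\sim$: $\Gamma^\Box,{\sim}\phi\Rightarrow{\sim}\chi$ / $\Gamma,{\sim}\Box\phi\Rightarrow{\sim}\Box\chi$; $\Box^{\Join}$: $\Gamma^\Box,\Gamma^\Diamond_\sim\Rightarrow\chi$ / $\Gamma\Rightarrow\Box\chi$; $\Diamond^{\Join}$: ${\sim}\phi\Rightarrow\chi$ / $\Gamma,{\sim}\Box\phi\Rightarrow\Diamond\chi$; $\Box^{\Join}_\sim$: $\phi\Rightarrow{\sim}\chi$ / $\Gamma,\Diamond\phi\Rightarrow{\sim}\Box\chi$; $\Diamond^{\Join}_\sim$: $\Gamma^\Box,\Gamma^\Diamond_\sim\Rightarrow{\sim}\chi$ / $\Gamma\Rightarrow{\sim}\Diamond\chi$; $\Diamond^1$: $\Gamma^\Box,\Gamma^\Diamond_\sim,\phi\Rightarrow\chi$ / $\Gamma,\Diamond\phi\Rightarrow\Diamond\chi$;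 $\Box^1_\sim$: $\Gamma^\Box,\Gamma^\Diamond_\sim,{\sim}\phi\Rightarrow{\sim}\chi$ / $\Gamma,{\sim}\Box\phi\Rightarrow{\sim}\Box\chi$; $\Diamond^{1,\Join}$: $\Gamma^\Box,\Gamma^\Diamond_\sim,{\sim}\phi\Rightarrow\chi$ / $\Gamma,{\sim}\Box\phi\Rightarrow\Diamond\chi$; $\Box^{1,\Join}_\sim$: $\Gamma^\Box,\Gamma^\Diamond_\sim,\phi\Rightarrow{\sim}\chi$ / $\Gamma,\Diamond\phi\Rightarrow{\sim}\Box\chi$. Calculi: $\mathcal{G}\mathsf{CN4K}=\mathcal{G}\mathsf{N4}+\{\Box,\Diamond,\Box_\sim,\Diamond_\sim\}$; $\mathcal{G}\mathsf{CN4K}^\curlyvee=\mathcal{G}\mathsf{N4}+\{\Box,\Diamond^\curlyvee,\Box^\curlyvee_\sim,\Diamond_\sim\}$; $\mathcal{G}\mathsf{CN4K}^\pm=\mathcal{G}\mathsf{N4}+\{\Box,\Diamond^\pm,\Box^\pm_\sim,\Diamond_\sim\}$; $\mathcal{G}\mathsf{CN4K}^{\Join}=\mathcal{G}\mathsf{N4}+\{\Box^{\Join},\Diamond,\Diamond^{\Join},\Box_\sim,\Box^{\Join}_\sim,\Diamond^{\Join}_\sim\}$; $\mathcal{G}\mathsf{CN4K}^1=\mathcal{G}\mathsf{N4}+\{\Box^{\Join},\Diamond^1,\Diamond^{1,\Join},\Box^1_\sim,\Box^{1,\Join}_\sim,\Diamond^{\Join}_\sim\}$. A proof is a finite tree of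 sequents, each node obtained from its children by a rule, whose leaves are axioms. *)

(* Defs.v *)
From Stdlib Require Import List Permutation.
Import ListNotations.

Inductive form : Type :=
| Var  : nat -> form
| Neg  : form -> form          (* strong negation ~ *)
| And  : form -> form -> form
| Or   : form -> form -> form
| Imp  : form -> form -> form
| Box  : form -> form
| Dia  : form -> form.

Record model : Type := Model {
  W   : Type;
  le  : W -> W -> Prop;
  Rbp : W -> W -> Prop;
  Rbm : W -> W -> Prop;
  Rdp : W -> W -> Prop;
  Rdm : W -> W -> Prop;
  vp  : nat -> W -> Prop;
  vm  : nat -> W -> Prop
}.

(* sup M true phi w  :  w ||-^+ phi ;  sup M false phi w  :  w ||-^- phi *)
Fixpoint sup (M : model) (b : bool) (phi : form) (w : W M) {struct phi} : Prop :=
  match phi with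
  | Var p => if b then vp M p w else vm M p w
  | Neg a => sup M (negb b) a w
  | And a c => if b then sup M true a w /\ sup M true c w
               else sup M false a w \/ sup M false c w
  | Or a c => if b then sup M true a w \/ sup M true c w
              else sup M false a w /\ sup M false c w
  | Imp a c => if b then forall w', le M w w' -> sup M true a w' -> sup M true c w'
               else sup M true a w /\ sup M false c w
  | Box a => if b then forall w', le M w w' -> forall w'', Rbp M w' w'' -> sup M true a w''
             else forall w', le M w w' -> exists w'', Rbm M w' w'' /\ sup M false a w''
  | Dia a => if b then forall w', le M w w' -> exists w'', Rdp M w' w'' /\ sup M true a w''
             else forall w', le M w w' -> forall w'', Rdm M w' w'' -> sup M false a w''
  end.

Inductive logic : Type := CN4K | CN4Kpm | CN4Kvee | CN4Kjoin | CN4K1.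

Definition frame_class (L : logic) (M : model) : Prop :=
  match L with
  | CN4K => True
  | CN4Kpm => Rbp M = Rdp M /\ Rbm M = Rdm M
  | CN4Kvee => Rbp M = Rbm M /\ Rdp M = Rdm M
  | CN4Kjoin => Rbp M = Rdm M /\ Rdp M = Rbm M
  | CN4K1 => Rbp M = Rbm M /\ Rbm M = Rdp M /\ Rdp M = Rdm M
  end.

Definition is_model (L : logic) (M : model) : Prop :=
  inhabited (W M) /\
  (forall w, le M w w) /\
  (forall u v w, le M u v -> le M v w -> le M u w) /\
  frame_class L M /\
  (forall p u v, le M u v -> vp M p u -> vp M p v) /\
  (forall p u v, le M u v -> vm M p u -> vm M p v).

Definition valid (L : logic) (chi : form) : Prop :=
  forall M : model, is_model L M -> forall w : W M, sup M true chi w.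

Definition seq_valid (L : logic) (G : list form) (phi : form) : Prop :=
  match G with
  | [] => valid L phi
  | g :: gs => valid L (Imp (fold_left And gs g) phi)
  end.

(* Multisets are represented by lists; every rule's conclusion context is taken
   up to permutation. *)

Fixpoint boxes (G : list form) : list form :=
  match G with
  | [] => []
  | Box a :: G' => a :: boxes G'
  | _ :: G' => boxes G'
  end.

Fixpoint ndias (G : list form) : list form :=
  match G with
  | [] => []
  | Neg (Dia a) :: G' => Neg a :: ndias G'
  | _ :: G' => ndias G'
  end.

Inductive prov (L : logic) : list form -> form -> Prop :=
| ax_var : forall p G D, Permutation D (Var p :: G) -> prov L D (Var p)
| ax_nvar : forall p G D, Permutation D (Neg (Var p) :: G) -> prov L D (Neg (Var p))
| nn_l : forall a G D psi, Permutation D (Neg (Neg a) :: G) ->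
    prov L (a :: G) psi -> prov L D psi
| nn_r : forall G a, prov L G a -> prov L G (Neg (Neg a))
| and_l : forall a c G D psi, Permutation D (And a c :: G) ->
    prov L (a :: c :: G) psi -> prov L D psi
| and_r : forall G a c, prov L G a -> prov L G c -> prov L G (And a c)
| or_l : forall a c G D psi, Permutation D (Or a c :: G) ->
    prov L (a :: G) psi -> prov L (c :: G) psi -> prov L D psi
| or_r1 : forall G a c, prov L G a -> prov L G (Or a c)
| or_r2 : forall G a c, prov L G c -> prov L G (Or a c)
| nor_l : forall a c G D psi, Permutation D (Neg (Or a c) :: G) ->
    prov L (Neg a :: Neg c :: G) psi -> prov L D psi
| nor_r : forall G a c, prov L G (Neg a) -> prov L G (Neg c) -> prov L G (Neg (Or a c))
| nand_l : forall a c G D psi, Permutation D (Neg (And a c) :: G) ->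
    prov L (Neg a :: G) psi -> prov L (Neg c :: G) psi -> prov L D psi
| nand_r1 : forall G a c, prov L G (Neg a) -> prov L G (Neg (And a c))
| nand_r2 : forall G a c, prov L G (Neg c) -> prov L G (Neg (And a c))
| imp_l : forall a c G D psi, Permutation D (Imp a c :: G) ->
    prov L (Imp a c :: G) a -> prov L (c :: G) psi -> prov L D psi
| imp_r : forall G a c, prov L (a :: G) c -> prov L G (Imp a c)
| nimp_l : forall a c G D psi, Permutation D (Neg (Imp a c) :: G) ->
    prov L (a :: Neg c :: G) psi -> prov L D psi
| nimp_r : forall G a c, prov L G a -> prov L G (Neg c) -> prov L G (Neg (Imp a c))
| r_box : forall G c, In L [CN4K; CN4Kpm; CN4Kvee] ->
    prov L (boxes G) c -> prov L G (Box c)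
| r_dia : forall a c G D, In L [CN4K; CN4Kjoin] -> Permutation D (Dia a :: G) ->
    prov L [a] c -> prov L D (Dia c)
| r_nbox : forall a c G D, In L [CN4K; CN4Kjoin] -> Permutation D (Neg (Box a) :: G) ->
    prov L [Neg a] (Neg c) -> prov L D (Neg (Box c))
| r_ndia : forall G c, In L [CN4K; CN4Kpm; CN4Kvee] ->
    prov L (ndias G) (Neg c) -> prov L G (Neg (Dia c))
| r_dia_pm : forall a c G D, L = CN4Kpm -> Permutation D (Dia a :: G) ->
    prov L (boxes G ++ [a]) c -> prov L D (Dia c)
| r_nbox_pm : forall a c G D, L = CN4Kpm -> Permutation D (Neg (Box a) :: G) ->
    prov L (ndias G ++ [Neg a]) (Neg c) -> prov L D (Neg (Box c))
| r_dia_vee : forall a c G D, L = CN4Kvee -> Permutation D (Dia a :: G) ->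
    prov L (ndias G ++ [a]) c -> prov L D (Dia c)
| r_nbox_vee : forall a c G D, L = CN4Kvee -> Permutation D (Neg (Box a) :: G) ->
    prov L (boxes G ++ [Neg a]) (Neg c) -> prov L D (Neg (Box c))
| r_box_join : forall G c, In L [CN4Kjoin; CN4K1] ->
    prov L (boxes G ++ ndias G) c -> prov L G (Box c)
| r_dia_join : forall a c G D, L = CN4Kjoin -> Permutation D (Neg (Box a) :: G) ->
    prov L [Neg a] c -> prov L D (Dia c)
| r_nbox_join : forall a c G D, L = CN4Kjoin -> Permutation D (Dia a :: G) ->
    prov L [a] (Neg c) -> prov L D (Neg (Box c))
| r_ndia_join : forall G c, In L [CN4Kjoin; CN4K1] ->
    prov L (boxes G ++ ndias G) (Neg c) -> prov L G (Neg (Dia c))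
| r_dia_1 : forall a c G D, L = CN4K1 -> Permutation D (Dia a :: G) ->
    prov L (boxes G ++ ndias G ++ [a]) c -> prov L D (Dia c)
| r_nbox_1 : forall a c G D, L = CN4K1 -> Permutation D (Neg (Box a) :: G) ->
    prov L (boxes G ++ ndias G ++ [Neg a]) (Neg c) -> prov L D (Neg (Box c))
| r_dia_1join : forall a c G D, L = CN4K1 -> Permutation D (Neg (Box a) :: G) ->
    prov L (boxes G ++ ndias G ++ [Neg a]) c -> prov L D (Dia c)
| r_nbox_1join : forall a c G D, L = CN4K1 -> Permutation D (Dia a :: G) ->
    prov L (boxes G ++ ndias G ++ [a]) (Neg c) -> prov L D (Neg (Box c)).

(* Main.v *)
Require Import Defs.
From Stdlib Require Import List Permutation.
From Stdlib Require Import Classical Lia.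
Import ListNotations.

Lemma boxes_fm l : boxes l = flat_map (fun x => match x with Box a => [a] | _ => [] end) l.
Proof.
  induction l as [|x l IH]; [reflexivity|].
  destruct x as [p|y|y1 y2|y1 y2|y1 y2|y|y]; simpl; rewrite IH; reflexivity.
Qed.

Lemma ndias_fm l : ndias l = flat_map (fun x => match x with Neg (Dia a) => [Neg a] | _ => [] end) l.
Proof.
  induction l as [|x l IH]; [reflexivity|].
  destruct x as [p|y|y1 y2|y1 y2|y1 y2|y|y]; try destruct y; simpl; rewrite IH; reflexivity.
Qed.

Lemma perm_boxes l l' : Permutation l l' -> Permutation (boxes l) (boxes l').
Proof. intro H; rewrite !boxes_fm; apply Permutation_flat_map; exact H. Qed.

Lemma perm_ndias l l' : Permutation l l' -> Permutation (ndias l) (ndias l').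
Proof. intro H; rewrite !ndias_fm; apply Permutation_flat_map; exact H. Qed.

Lemma in_boxes x l : In (Box x) l -> In x (boxes l).
Proof. rewrite boxes_fm; intro H; apply in_flat_map; exists (Box x); simpl; auto. Qed.

Lemma in_ndias x l : In (Neg (Dia x)) l -> In (Neg x) (ndias l).
Proof. rewrite ndias_fm; intro H; apply in_flat_map; exists (Neg (Dia x)); simpl; auto. Qed.

Lemma in_perm (phi : form) l : In phi l -> exists G, Permutation l (phi :: G).
Proof.
  intro H. destruct (in_split _ _ H) as (l1 & l2 & ->). exists (l1 ++ l2).
  apply Permutation_sym, Permutation_middle.
Qed.

Ltac pt := match goal with
  | HP : Permutation ?D ?D', H : Permutation ?D (?x :: ?G) |- Permutation ?D' _ =>
      exact (Permutation_trans (Permutation_sym HP) H) end.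

Lemma prov_perm L D phi : prov L D phi -> forall D', Permutation D D' -> prov L D' phi.
Proof.
  induction 1; intros D' HP.
  - eapply ax_var; pt.
  - eapply ax_nvar; pt.
  - eapply nn_l; [pt|eassumption].
  - apply nn_r; auto.
  - eapply and_l; [pt|eassumption].
  - apply and_r; auto.
  - eapply or_l; [pt|eassumption|eassumption].
  - apply or_r1; auto.
  - apply or_r2; auto.
  - eapply nor_l; [pt|eassumption].
  - apply nor_r; auto.
  - eapply nand_l; [pt|eassumption|eassumption].
  - apply nand_r1; auto.
  - apply nand_r2; auto.
  - eapply imp_l; [pt|eassumption|eassumption].
  - apply imp_r; apply IHprov; auto.
  - eapply nimp_l; [pt|eassumption].
  - apply nimp_r; auto.
  - apply r_box; [assumption|]. apply IHprov, perm_boxes; auto.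
  - eapply r_dia; [eassumption|pt|eassumption].
  - eapply r_nbox; [eassumption|pt|eassumption].
  - apply r_ndia; [assumption|]. apply IHprov, perm_ndias; auto.
  - eapply r_dia_pm; [eassumption|pt|eassumption].
  - eapply r_nbox_pm; [eassumption|pt|eassumption].
  - eapply r_dia_vee; [eassumption|pt|eassumption].
  - eapply r_nbox_vee; [eassumption|pt|eassumption].
  - apply r_box_join; [assumption|]. apply IHprov, Permutation_app; [apply perm_boxes|apply perm_ndias]; auto.
  - eapply r_dia_join; [eassumption|pt|eassumption].
  - eapply r_nbox_join; [eassumption|pt|eassumption].
  - apply r_ndia_join; [assumption|]. apply IHprov, Permutation_app; [apply perm_boxes|apply perm_ndias]; auto.
  - eapply r_dia_1; [eassumption|pt|eassumption].
  - eapply r_nbox_1; [eassumption|pt|eassumption].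
  - eapply r_dia_1join; [eassumption|pt|eassumption].
  - eapply r_nbox_1join; [eassumption|pt|eassumption].
Qed.

Lemma ax_in L D p : In (Var p) D -> prov L D (Var p).
Proof. intro H; destruct (in_perm _ _ H) as [G HG]; eapply ax_var; exact HG. Qed.
Lemma nax_in L D p : In (Neg (Var p)) D -> prov L D (Neg (Var p)).
Proof. intro H; destruct (in_perm _ _ H) as [G HG]; eapply ax_nvar; exact HG. Qed.

Definition Dec (full : list form) (phi : form) : Prop :=
  match phi with
  | And a c => In a full /\ In c full
  | Or a c => In a full \/ In c full
  | Imp a c => In c full
  | Neg (Neg a) => In a full
  | Neg (And a c) => In (Neg a) full \/ In (Neg c) full
  | Neg (Or a c) => In (Neg a) full /\ In (Neg c) full
  | Neg (Imp a c) => In a full /\ In (Neg c) full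
  | _ => False
  end.

Definition Inv (full ctx : list form) : Prop :=
  forall phi, In phi full -> In phi ctx \/ Dec full phi.

Definition OK L (full ctx : list form) (phi : form) : Prop :=
  match phi with
  | And _ _ | Or _ _ | Neg (Neg _) | Neg (And _ _) | Neg (Or _ _) | Neg (Imp _ _) => False
  | Imp a c => In c full \/ ~ prov L ctx a
  | _ => True
  end.

Definition Sat L full ctx : Prop := Inv full ctx /\ forall phi, In phi ctx -> OK L full ctx phi.

Definition NP L (ctx : list form) (gl : option form) : Prop :=
  match gl with Some psi => ~ prov L ctx psi | None => True end.

Fixpoint wt (phi : form) : nat :=
  match phi with
  | Var _ => 1
  | Neg a => 2 * wt a + 1
  | And a c | Or a c | Imp a c => wt a + wt c + 1
  | Box a | Dia a => wt a + 1
  end.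

Definition meas (l : list form) : nat := fold_right (fun x n => wt x + n) 0 l.

Lemma meas_perm l l' : Permutation l l' -> meas l = meas l'.
Proof. induction 1; simpl; lia. Qed.

Lemma Dec_mono f f' phi : incl f f' -> Dec f phi -> Dec f' phi.
Proof.
  intros H. destruct phi as [p|y|y1 y2|y1 y2|y1 y2|y|y]; simpl; try tauto;
  try (destruct y; simpl; try tauto); firstorder.
Qed.

Lemma step_inv full ctx phi G new : Inv full ctx -> Permutation ctx (phi :: G) ->
  Dec (new ++ full) phi -> Inv (new ++ full) (new ++ G).
Proof.
  intros Hinv HP Hd psi Hpsi. apply in_app_or in Hpsi. destruct Hpsi as [H|H].
  - left; apply in_or_app; left; exact H.
  - destruct (Hinv psi H) as [H'|H'].
    + apply (Permutation_in _ HP) in H'. destruct H' as [E|E].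
      * subst; right; exact Hd.
      * left; apply in_or_app; right; exact E.
    + right. eapply Dec_mono; [|exact H']. intros y Hy; apply in_or_app; right; exact Hy.
Qed.

Lemma saturate L gl : forall n full ctx, meas ctx < n -> Inv full ctx -> NP L ctx gl ->
  exists full' ctx', incl full full' /\ Sat L full' ctx' /\ NP L ctx' gl.
Proof.
  induction n as [|n IH]; intros full ctx Hm Hinv Hnp; [lia|].
  destruct (classic (exists phi, In phi ctx /\ ~ OK L full ctx phi)) as [[phi [Hin Hnok]]|Hall].
  2:{ exists full, ctx. split; [intros x Hx; exact Hx|]. split; [|exact Hnp]. split; [exact Hinv|].
      intros phi Hphi. apply NNPP. intro Hn. apply Hall. exists phi; split; assumption. }
  destruct (in_perm _ _ Hin) as [G HG].
  pose proof (meas_perm _ _ HG) as Hmeas. simpl in Hmeas.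
  assert (Hstep : forall new, Dec (new ++ full) phi -> meas (new ++ G) < meas ctx -> NP L (new ++ G) gl ->
     exists full' ctx', incl full full' /\ Sat L full' ctx' /\ NP L ctx' gl).
  { intros new Hd Hlt Hnp'. destruct (IH (new ++ full) (new ++ G)) as (f' & c' & Hi & Hs & Hn).
    - lia.
    - eapply step_inv; eauto.
    - exact Hnp'.
    - exists f', c'. split; [|split; assumption]. intros x Hx. apply Hi. apply in_or_app; right; exact Hx. }
  destruct phi as [p|phi'|a c|a c|a c|a|a]; simpl in Hnok;
    try (exfalso; apply Hnok; exact I).
  - destruct phi' as [p|a|a c|a c|a c|a|a]; simpl in Hnok;
      try (exfalso; apply Hnok; exact I).
    + apply (Hstep [a]); simpl; [auto|(unfold meas in *; simpl in *; lia)|].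
      destruct gl as [psi|]; [|exact I]. intro Hp; apply Hnp; eapply nn_l; [exact HG|exact Hp].
    + destruct gl as [psi|].
      * destruct (classic (prov L (Neg a :: G) psi)) as [Hp|Hp].
        -- apply (Hstep [Neg c]); simpl; [auto|(unfold meas in *; simpl in *; lia)|]. intro Hc. apply Hnp. eapply nand_l; eauto.
        -- apply (Hstep [Neg a]); simpl; [auto|(unfold meas in *; simpl in *; lia)|exact Hp].
      * apply (Hstep [Neg a]); simpl; [auto|(unfold meas in *; simpl in *; lia)|exact I].
    + apply (Hstep [Neg a; Neg c]); simpl; [auto|(unfold meas in *; simpl in *; lia)|].
      destruct gl as [psi|]; [|exact I]. intro Hp; apply Hnp; eapply nor_l; [exact HG|exact Hp].
    + apply (Hstep [a; Neg c]); simpl; [auto|(unfold meas in *; simpl in *; lia)|].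
      destruct gl as [psi|]; [|exact I]. intro Hp; apply Hnp; eapply nimp_l; [exact HG|exact Hp].
  - apply (Hstep [a; c]); simpl; [auto|(unfold meas in *; simpl in *; lia)|].
    destruct gl as [psi|]; [|exact I]. intro Hp; apply Hnp; eapply and_l; [exact HG|exact Hp].
  - destruct gl as [psi|].
    + destruct (classic (prov L (a :: G) psi)) as [Hp|Hp].
      * apply (Hstep [c]); simpl; [auto|(unfold meas in *; simpl in *; lia)|]. intro Hc. apply Hnp. eapply or_l; eauto.
      * apply (Hstep [a]); simpl; [auto|(unfold meas in *; simpl in *; lia)|exact Hp].
    + apply (Hstep [a]); simpl; [auto|(unfold meas in *; simpl in *; lia)|exact I].
  - assert (Hpa : prov L ctx a) by (apply NNPP; tauto).
    apply (Hstep [c]); simpl; [auto|(unfold meas in *; simpl in *; lia)|].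
    destruct gl as [psi|]; [|exact I]. intro Hp; apply Hnp.
    eapply imp_l; [exact HG| eapply prov_perm; [exact Hpa|exact HG] | exact Hp].
Qed.

Lemma inv_refl l : Inv l l.
Proof. intros x H; left; exact H. Qed.

Lemma inv_cons a full ctx : Inv full ctx -> Inv (a :: full) (a :: ctx).
Proof.
  intros Hinv x [E|H].
  - left; left; exact E.
  - destruct (Hinv x H) as [H'|H'].
    + left; right; exact H'.
    + right. eapply Dec_mono; [|exact H']. intros y Hy; right; exact Hy.
Qed.

Record world (L : logic) : Type := mkW {
  wfull : list form; wctx : list form; wo : option form; wsat : Sat L wfull wctx }.
Arguments mkW {L}. Arguments wfull {L}. Arguments wctx {L}. Arguments wo {L}. Arguments wsat {L}.

Lemma mkworld L full ctx gl o : Inv full ctx -> NP L ctx gl ->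
  exists Y : world L, incl full (wfull Y) /\ NP L (wctx Y) gl /\ wo Y = o.
Proof.
  intros H1 H2.
  destruct (saturate L gl (S (meas ctx)) full ctx (le_n _) H1 H2) as (f & c & Hi & Hs & Hn).
  exists (mkW f c o Hs). simpl; auto.
Qed.

Lemma in_full L (X : world L) phi : In phi (wfull X) ->
  (In phi (wctx X) /\ OK L (wfull X) (wctx X) phi) \/ Dec (wfull X) phi.
Proof.
  intro H. destruct (wsat X) as [Hinv Hok]. destruct (Hinv phi H) as [H'|H'].
  - left; split; auto.
  - right; exact H'.
Qed.

Lemma undec L (X : world L) phi : In phi (wfull X) -> ~ Dec (wfull X) phi -> In phi (wctx X).
Proof.
  intros H Hn. destruct (wsat X) as [Hinv _]. destruct (Hinv phi H); tauto.
Qed.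

Inductive kind := KBp | KBm | KDp | KDm.

Definition uBp (L : logic) (k : kind) : bool :=
  match k, L with
  | KBp, _ => true
  | KBm, (CN4Kvee | CN4K1) => true
  | KDp, (CN4Kpm | CN4K1) => true
  | KDm, (CN4Kjoin | CN4K1) => true
  | _, _ => false end.
Definition uDm (L : logic) (k : kind) : bool :=
  match k, L with
  | KDm, _ => true
  | KBp, (CN4Kjoin | CN4K1) => true
  | KBm, (CN4Kpm | CN4K1) => true
  | KDp, (CN4Kvee | CN4K1) => true
  | _, _ => false end.
Definition uDg (L : logic) (k : kind) : bool :=
  match k, L with
  | KDp, _ => true
  | KBp, (CN4Kpm | CN4K1) => true
  | KBm, (CN4Kjoin | CN4K1) => true
  | KDm, (CN4Kvee | CN4K1) => true
  | _, _ => false end.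
Definition uBg (L : logic) (k : kind) : bool :=
  match k, L with
  | KBm, _ => true
  | KBp, (CN4Kvee | CN4K1) => true
  | KDp, (CN4Kjoin | CN4K1) => true
  | KDm, (CN4Kpm | CN4K1) => true
  | _, _ => false end.

Definition Bp {L} (X Y : world L) := forall x, In (Box x) (wctx X) -> In x (wfull Y).
Definition Dm {L} (X Y : world L) := forall x, In (Neg (Dia x)) (wctx X) -> In (Neg x) (wfull Y).
Definition Dg {L} (X Y : world L) := forall d, wo X = Some (Dia d) ->
  ~ prov L (wctx X) (Dia d) -> ~ prov L (wctx Y) d.
Definition Bg {L} (X Y : world L) := forall d, wo X = Some (Neg (Box d)) ->
  ~ prov L (wctx X) (Neg (Box d)) -> ~ prov L (wctx Y) (Neg d).
Definition rel L k (X Y : world L) : Prop :=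
  (uBp L k = true -> Bp X Y) /\ (uDm L k = true -> Dm X Y) /\
  (uDg L k = true -> Dg X Y) /\ (uBg L k = true -> Bg X Y).

Definition Mc L : model :=
  Model (world L) (fun X Y => incl (wfull X) (wfull Y))
    (rel L KBp) (rel L KBm) (rel L KDp) (rel L KDm)
    (fun p X => In (Var p) (wfull X)) (fun p X => In (Neg (Var p)) (wfull X)).

Definition Zbp L G := if uDm L KBp then boxes G ++ ndias G else boxes G.
Definition Zdm L G := if uBp L KDm then boxes G ++ ndias G else ndias G.
Definition Zdp L G a := (if uBp L KDp then boxes G else []) ++ (if uDm L KDp then ndias G else []) ++ [a].
Definition Zbm L G a := (if uBp L KBm then boxes G else []) ++ (if uDm L KBm then ndias G else []) ++ [Neg a].

Lemma prem_bp L G c : prov L (Zbp L G) c -> prov L G (Box c).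
Proof. destruct L; unfold Zbp; simpl; intro H; solve [apply r_box; simpl; auto | apply r_box_join; simpl; auto]. Qed.
Lemma prem_dm L G c : prov L (Zdm L G) (Neg c) -> prov L G (Neg (Dia c)).
Proof. destruct L; unfold Zdm; simpl; intro H; solve [apply r_ndia; simpl; auto | apply r_ndia_join; simpl; auto]. Qed.
Lemma prem_dp L ctx G a d : Permutation ctx (Dia a :: G) -> prov L (Zdp L G a) d -> prov L ctx (Dia d).
Proof.
  destruct L; unfold Zdp; simpl; intros HP H.
  - eapply r_dia; [simpl; tauto|exact HP|exact H].
  - eapply r_dia_pm; [reflexivity|exact HP|exact H].
  - eapply r_dia_vee; [reflexivity|exact HP|exact H].
  - eapply r_dia; [simpl; tauto|exact HP|exact H].
  - eapply r_dia_1; [reflexivity|exact HP|exact H].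
Qed.
Lemma prem_dp_nb L ctx G a d : uBg L KDp = true -> Permutation ctx (Dia a :: G) ->
  prov L (Zdp L G a) (Neg d) -> prov L ctx (Neg (Box d)).
Proof.
  destruct L; unfold Zdp; simpl; intros Hu HP H; try discriminate.
  - eapply r_nbox_join; [reflexivity|exact HP|exact H].
  - eapply r_nbox_1join; [reflexivity|exact HP|exact H].
Qed.
Lemma prem_bm L ctx G a d : Permutation ctx (Neg (Box a) :: G) ->
  prov L (Zbm L G a) (Neg d) -> prov L ctx (Neg (Box d)).
Proof.
  destruct L; unfold Zbm; simpl; intros HP H.
  - eapply r_nbox; [simpl; tauto|exact HP|exact H].
  - eapply r_nbox_pm; [reflexivity|exact HP|exact H].
  - eapply r_nbox_vee; [reflexivity|exact HP|exact H].
  - eapply r_nbox; [simpl; tauto|exact HP|exact H].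
  - eapply r_nbox_1; [reflexivity|exact HP|exact H].
Qed.
Lemma prem_bm_dg L ctx G a d : uDg L KBm = true -> Permutation ctx (Neg (Box a) :: G) ->
  prov L (Zbm L G a) d -> prov L ctx (Dia d).
Proof.
  destruct L; unfold Zbm; simpl; intros Hu HP H; try discriminate.
  - eapply r_dia_join; [reflexivity|exact HP|exact H].
  - eapply r_dia_1join; [reflexivity|exact HP|exact H].
Qed.

Lemma goal_choice (o : option form) (P1 P2 : form -> Prop) : exists gl : option form,
  (forall d, o = Some (Dia d) -> P1 d -> gl = Some d) /\
  (forall d, o = Some (Neg (Box d)) -> P2 d -> gl = Some (Neg d)) /\
  (forall psi, gl = Some psi -> (exists d, o = Some (Dia d) /\ P1 d /\ psi = d) \/
                               (exists d, o = Some (Neg (Box d)) /\ P2 d /\ psi = Neg d)).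
Proof.
  destruct (classic (exists d, o = Some (Dia d) /\ P1 d)) as [[d [Ho Hp]]|H1].
  - exists (Some d). split; [intros d' Ho' _; rewrite Ho in Ho'; injection Ho' as E; subst; reflexivity|].
    split; [intros d' Ho'; rewrite Ho in Ho'; discriminate|].
    intros psi Hpsi; injection Hpsi as E; subst; left; eauto.
  - destruct (classic (exists d, o = Some (Neg (Box d)) /\ P2 d)) as [[d [Ho Hp]]|H2].
    + exists (Some (Neg d)). split; [intros d' Ho'; rewrite Ho in Ho'; discriminate|].
      split; [intros d' Ho' _; rewrite Ho in Ho'; injection Ho' as E; subst; reflexivity|].
      intros psi Hpsi; injection Hpsi as E; subst; right; eauto.
    + exists None. split; [intros d Ho Hp; exfalso; eauto|].
      split; [intros d Ho Hp; exfalso; eauto|]. discriminate.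
Qed.
Lemma truth L phi : forall X : world L,
  (In phi (wfull X) -> sup (Mc L) true phi X) /\
  (~ prov L (wctx X) phi -> ~ sup (Mc L) true phi X) /\
  (In (Neg phi) (wfull X) -> sup (Mc L) false phi X) /\
  (~ prov L (wctx X) (Neg phi) -> ~ sup (Mc L) false phi X).
Proof.
  induction phi as [p|a IHa|a IHa c IHc|a IHa c IHc|a IHa c IHc|a IHa|a IHa]; intro X; simpl.
  all: try (pose proof (IHa X) as (IHa1 & IHa2 & IHa3 & IHa4)).
  all: try (pose proof (IHc X) as (IHc1 & IHc2 & IHc3 & IHc4)).
  - split; [|split; [|split]].
    + auto.
    + intros Hn H. apply Hn, ax_in. apply undec; simpl; auto.
    + auto.
    + intros Hn H. apply Hn, nax_in. apply undec; simpl; auto.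
  - split; [|split; [|split]].
    + exact IHa3.
    + exact IHa4.
    + intro H. apply IHa1. destruct (in_full L X _ H) as [[_ Hk]|Hd]; [simpl in Hk; contradiction|exact Hd].
    + intros Hn H. apply (IHa2 (fun Hp => Hn (nn_r _ _ _ Hp))). exact H.
  - split; [|split; [|split]].
    + intro H. destruct (in_full L X _ H) as [[_ Hk]|[Ha Hc]]; [simpl in Hk; contradiction|]. auto.
    + intros Hn [Ha Hc]. destruct (classic (prov L (wctx X) a)) as [Pa|Pa]; [|exact (IHa2 Pa Ha)].
      destruct (classic (prov L (wctx X) c)) as [Pc|Pc]; [|exact (IHc2 Pc Hc)].
      apply Hn, and_r; assumption.
    + intro H. destruct (in_full L X _ H) as [[_ Hk]|[Ha|Hc]]; [simpl in Hk; contradiction| |]; auto.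
    + intros Hn [Ha|Hc].
      * refine (IHa4 _ Ha). intro P; apply Hn, nand_r1, P.
      * refine (IHc4 _ Hc). intro P; apply Hn, nand_r2, P.
  - split; [|split; [|split]].
    + intro H. destruct (in_full L X _ H) as [[_ Hk]|[Ha|Hc]]; [simpl in Hk; contradiction| |]; auto.
    + intros Hn [Ha|Hc].
      * refine (IHa2 _ Ha). intro P; apply Hn, or_r1, P.
      * refine (IHc2 _ Hc). intro P; apply Hn, or_r2, P.
    + intro H. destruct (in_full L X _ H) as [[_ Hk]|[Ha Hc]]; [simpl in Hk; contradiction|]. auto.
    + intros Hn [Ha Hc]. destruct (classic (prov L (wctx X) (Neg a))) as [Pa|Pa]; [|exact (IHa4 Pa Ha)].
      destruct (classic (prov L (wctx X) (Neg c))) as [Pc|Pc]; [|exact (IHc4 Pc Hc)].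
      apply Hn, nor_r; assumption.
  - split; [|split; [|split]].
    + intros H X' HX' Ha. pose proof (IHa X') as (A1 & A2 & _). pose proof (IHc X') as (C1 & _).
      destruct (in_full L X' _ (HX' _ H)) as [[_ Hk]|Hc]; try simpl in Hk.
      * destruct Hk as [Hk|Hk]; [auto|exfalso; exact (A2 Hk Ha)].
      * auto.
    + intros Hn H.
      assert (Hn' : ~ prov L (a :: wctx X) c) by (intro P; apply Hn, imp_r, P).
      destruct (mkworld L (a :: wfull X) (a :: wctx X) (Some c) None) as (Y & HYi & HYn & _).
      { apply inv_cons. exact (proj1 (wsat X)). }
      { exact Hn'. }
      pose proof (IHa Y) as (A1 & _). pose proof (IHc Y) as (_ & C2 & _).
      apply (C2 HYn). apply H.
      * intros x Hx; apply HYi; right; exact Hx.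
      * apply A1, HYi; left; reflexivity.
    + intro H. destruct (in_full L X _ H) as [[_ Hk]|[Ha Hc]]; [simpl in Hk; contradiction|]. auto.
    + intros Hn [Ha Hc]. destruct (classic (prov L (wctx X) a)) as [Pa|Pa]; [|exact (IHa2 Pa Ha)].
      destruct (classic (prov L (wctx X) (Neg c))) as [Pc|Pc]; [|exact (IHc4 Pc Hc)].
      apply Hn, nimp_r; assumption.
  - split; [|split; [|split]].
    + intros H X' HX' Y HR. destruct HR as [HB _].
      apply (proj1 (IHa Y)). apply (HB eq_refl).
      apply undec; [apply HX', H| simpl; tauto].
    + intros Hn H.
      assert (Hn' : ~ prov L (Zbp L (wctx X)) a) by (intro P; apply Hn, prem_bp, P).
      destruct (mkworld L (Zbp L (wctx X)) (Zbp L (wctx X)) (Some a) None) as (Y & HYi & HYn & _).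
      { apply inv_refl. } { exact Hn'. }
      apply (proj1 (proj2 (IHa Y)) HYn).
      apply (H (mkW (wfull X) (wctx X) None (wsat X)) (fun x Hx => Hx) Y).
      split; [|split; [|split]].
      * intros _ x Hx. apply HYi. unfold Zbp. destruct (uDm L KBp);
          [apply in_or_app; left|]; apply in_boxes; exact Hx.
      * intros Hu x Hx. apply HYi. unfold Zbp. rewrite Hu. apply in_or_app; right. apply in_ndias; exact Hx.
      * intros _ d Ho; discriminate Ho.
      * intros _ d Ho; discriminate Ho.
    + intros H X' HX'.
      assert (Hc : In (Neg (Box a)) (wctx X')) by (apply undec; [apply HX', H| simpl; tauto]).
      destruct (in_perm _ _ Hc) as [G HG].
      destruct (goal_choice (wo X') (fun d => uDg L KBm = true /\ ~ prov L (wctx X') (Dia d))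
                  (fun d => ~ prov L (wctx X') (Neg (Box d)))) as (gl & H1 & H2 & H3).
      destruct (mkworld L (Zbm L G a) (Zbm L G a) gl None) as (Y & HYi & HYn & _).
      { apply inv_refl. }
      { destruct gl as [psi|]; [|exact I].
        destruct (H3 psi eq_refl) as [(d & Ho & [Hu Hp] & ->)|(d & Ho & Hp & ->)].
        - intro Hq; apply Hp; eapply prem_bm_dg; eauto.
        - intro Hq; apply Hp; eapply prem_bm; eauto. }
      exists Y. split.
      * split; [|split; [|split]].
        -- intros Hu x Hx. apply HYi. unfold Zbm. rewrite Hu. apply in_or_app; left. apply in_boxes.
           apply (Permutation_in _ HG) in Hx. destruct Hx as [E|E]; [discriminate|exact E].
        -- intros Hu x Hx. apply HYi. unfold Zbm. rewrite Hu. apply in_or_app; right; apply in_or_app; left.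
           apply in_ndias.
           apply (Permutation_in _ HG) in Hx. destruct Hx as [E|E]; [discriminate|exact E].
        -- intros Hu d Ho Hp. pose proof (H1 d Ho (conj Hu Hp)) as E. rewrite E in HYn. exact HYn.
        -- intros _ d Ho Hp. pose proof (H2 d Ho Hp) as E. rewrite E in HYn. exact HYn.
      * apply (proj1 (proj2 (proj2 (IHa Y)))). apply HYi. unfold Zbm.
        apply in_or_app; right; apply in_or_app; right; left; reflexivity.
    + intros Hn H.
      destruct (H (mkW (wfull X) (wctx X) (Some (Neg (Box a))) (wsat X)) (fun x Hx => Hx)) as (Y & HR & HY).
      destruct HR as (_ & _ & _ & HBg).
      exact (proj2 (proj2 (proj2 (IHa Y))) (HBg eq_refl a eq_refl Hn) HY).
  - split; [|split; [|split]].
    + intros H X' HX'.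
      assert (Hc : In (Dia a) (wctx X')) by (apply undec; [apply HX', H| simpl; tauto]).
      destruct (in_perm _ _ Hc) as [G HG].
      destruct (goal_choice (wo X') (fun d => ~ prov L (wctx X') (Dia d))
                  (fun d => uBg L KDp = true /\ ~ prov L (wctx X') (Neg (Box d)))) as (gl & H1 & H2 & H3).
      destruct (mkworld L (Zdp L G a) (Zdp L G a) gl None) as (Y & HYi & HYn & _).
      { apply inv_refl. }
      { destruct gl as [psi|]; [|exact I].
        destruct (H3 psi eq_refl) as [(d & Ho & Hp & ->)|(d & Ho & [Hu Hp] & ->)].
        - intro Hq; apply Hp; eapply prem_dp; eauto.
        - intro Hq; apply Hp; eapply prem_dp_nb; eauto. }
      exists Y. split.
      * split; [|split; [|split]].
        -- intros Hu x Hx. apply HYi. unfold Zdp. rewrite Hu. apply in_or_app; left. apply in_boxes.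
           apply (Permutation_in _ HG) in Hx. destruct Hx as [E|E]; [discriminate|exact E].
        -- intros Hu x Hx. apply HYi. unfold Zdp. rewrite Hu. apply in_or_app; right; apply in_or_app; left.
           apply in_ndias.
           apply (Permutation_in _ HG) in Hx. destruct Hx as [E|E]; [discriminate|exact E].
        -- intros _ d Ho Hp. pose proof (H1 d Ho Hp) as E. rewrite E in HYn. exact HYn.
        -- intros Hu d Ho Hp. pose proof (H2 d Ho (conj Hu Hp)) as E. rewrite E in HYn. exact HYn.
      * apply (proj1 (IHa Y)). apply HYi. unfold Zdp.
        apply in_or_app; right; apply in_or_app; right; left; reflexivity.
    + intros Hn H.
      destruct (H (mkW (wfull X) (wctx X) (Some (Dia a)) (wsat X)) (fun x Hx => Hx)) as (Y & HR & HY).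
      destruct HR as (_ & _ & HDg & _).
      exact (proj1 (proj2 (IHa Y)) (HDg eq_refl a eq_refl Hn) HY).
    + intros H X' HX' Y HR. destruct HR as (_ & HD & _).
      apply (proj1 (proj2 (proj2 (IHa Y)))). apply (HD eq_refl).
      apply undec; [apply HX', H| simpl; tauto].
    + intros Hn H.
      assert (Hn' : ~ prov L (Zdm L (wctx X)) (Neg a)) by (intro P; apply Hn, prem_dm, P).
      destruct (mkworld L (Zdm L (wctx X)) (Zdm L (wctx X)) (Some (Neg a)) None) as (Y & HYi & HYn & _).
      { apply inv_refl. } { exact Hn'. }
      apply (proj2 (proj2 (proj2 (IHa Y))) HYn).
      apply (H (mkW (wfull X) (wctx X) None (wsat X)) (fun x Hx => Hx) Y).
      split; [|split; [|split]].
      * intros Hu x Hx. apply HYi. unfold Zdm. rewrite Hu. apply in_or_app; left. apply in_boxes; exact Hx.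
      * intros _ x Hx. apply HYi. unfold Zdm. destruct (uBp L KDm);
          [apply in_or_app; right|]; apply in_ndias; exact Hx.
      * intros _ d Ho; discriminate Ho.
      * intros _ d Ho; discriminate Ho.
Qed.

Lemma fold_sup L (X : world L) gs : forall g, sup (Mc L) true g X ->
  (forall x, In x gs -> In x (wfull X)) -> sup (Mc L) true (fold_left And gs g) X.
Proof.
  induction gs as [|h gs IH]; intros g Hg H; simpl; [exact Hg|].
  apply IH; [|intros x Hx; apply H; right; exact Hx].
  simpl. split; [exact Hg|]. apply (proj1 (truth L h X)). apply H; left; reflexivity.
Qed.

Theorem theorem6 (L : logic) (G : list form) (phi : form) :
  seq_valid L G phi -> prov L G phi.
Proof.
  intro Hv. apply NNPP. intro Hn.
  destruct (mkworld L G G (Some phi) None (inv_refl G) Hn) as (X & HXi & HXn & _).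
  assert (Hm : is_model L (Mc L)).
  { split; [exact (inhabits X)|]. split; [intros w x Hx; exact Hx|].
    split; [intros u v w H1 H2 x Hx; apply H2, H1, Hx|].
    split; [destruct L; simpl; repeat split; reflexivity|].
    split; intros p u v H1 H2; apply H1, H2. }
  apply (proj1 (proj2 (truth L phi X)) HXn).
  destruct G as [|g gs]; simpl in Hv.
  - exact (Hv _ Hm X).
  - apply (Hv _ Hm X X (fun x Hx => Hx)).
    apply fold_sup.
    + apply (proj1 (truth L g X)). apply HXi; left; reflexivity.
    + intros x Hx; apply HXi; right; exact Hx.
Qed.
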